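(* Let $\mathcal{A}=\{A_0,\ldots,A_d\}$ be an association scheme with splitting field $L$, and let $E\subseteq\mathbb{C}$ be a field containing $L$ that is closed under complex conjugation. If $\psi:E[\mathcal{A}]\to E[\mathcal{A}]$ is a non-zero $E$-linear map with $(MN)^\psi=M^\psi N^\psi$ and $(M\circ N)^\psi=M^\psi\circ N^\psi$ for all $M,N\in E[\mathcal{A}]$, then $(M^T)^\psi=(M^\psi)^T$ and $(M^* )^\psi=(M^\psi)^*$ for all $M\in E[\mathcal{A}]$.
   Context: An association scheme on $v$ vertices with $d$ classes is a set $\mathcal{A}=\{A_0,\ldots,A_d\}$ of $v\times v$ $(0,1)$-matrices such that $A_0=I$, $\sum_i A_i=J$ (the all-ones matrix), $A_i^T\in\mathcal{A}$ for all $i$, $A_iA_j=A_jA_i$ for all $i,j$, and each $A_iA_j$ lies in the span of $\mathcal{A}$. Its principal idempotents $E_0,\ldots,E_d$ are the pairwise orthogonal Hermitian idempotents with $\sum_jE_j=I$ forming a basis of the span of $\mathcal{A}$, with $A_iE_j=p_i(j)E_j$; the splitting field $L$ is $\mathbb{Q}$ adjoined all $p_i(j)$. $E[\mathcal{A}]$ is the $E$-span of $\mathcal{A}$; $\circ$ denotes the Schur (entrywise) product and $M^*$ the conjugate transpose. *)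

(* Defs.v *)
From mathcomp Require Import all_boot all_algebra all_field.
From mathcomp Require Import complex.
From mathcomp Require Import Rstruct.
Set Implicit Arguments.
Unset Strict Implicit.
Unset Printing Implicit Defensive.
Import GRing.Theory Num.Theory.
Local Open Scope ring_scope.

Definition CC : numClosedFieldType := complex Rdefinitions.R.

Definition ctrmx (v : nat) (M : 'M[CC]_v) : 'M[CC]_v :=
  (map_mx (fun x : CC => x^*) M)^T.

Definition schur (v : nat) (M N : 'M[CC]_v) : 'M[CC]_v :=
  \matrix_(i, j) (M i j * N i j).

Definition is_subfield (S : {pred CC}) : Prop :=
  ((0 \in S) /\
      (1 \in S) /\
      ((forall x y, x \in S -> y \in S -> x + y \in S)) /\
      ((forall x, x \in S -> - x \in S)) /\
      ((forall x y, x \in S -> y \in S -> x * y \in S)) /\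
      ((forall x, x \in S -> x != 0 -> x^-1 \in S))).

Definition span_in (S : {pred CC}) (v n : nat) (B : 'I_n -> 'M[CC]_v)
    (M : 'M[CC]_v) : Prop :=
  exists c : 'I_n -> CC, (forall i, c i \in S) /\ M = \sum_(i < n) c i *: B i.

Definition Cspan (v n : nat) (B : 'I_n -> 'M[CC]_v) (M : 'M[CC]_v) : Prop :=
  span_in predT B M.

Definition association_scheme (v d : nat) (A : 'I_d.+1 -> 'M[CC]_v) : Prop :=
  (((forall i x y, A i x y = 0 \/ A i x y = 1)) /\
      (A ord0 = 1%:M) /\
      (\sum_(i < d.+1) A i = const_mx 1) /\
      ((forall i, exists j, (A i)^T = A j)) /\
      ((forall i j, A i *m A j = A j *m A i)) /\
      ((forall i j, Cspan A (A i *m A j)))).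

Definition principal_idempotents (v d : nat) (A Ev : 'I_d.+1 -> 'M[CC]_v)
    : Prop :=
  (((forall j, Ev j *m Ev j = Ev j)) /\
      ((forall j k, j != k -> Ev j *m Ev k = 0)) /\
      ((forall j, ctrmx (Ev j) = Ev j)) /\
      (\sum_(j < d.+1) Ev j = 1%:M) /\
      ((forall c : 'I_d.+1 -> CC, \sum_(j < d.+1) c j *: Ev j = 0 ->
          forall j, c j = 0)) /\
      ((forall j, Cspan A (Ev j))) /\
      ((forall i, Cspan Ev (A i))) /\
      ((forall i j, exists p : CC, A i *m Ev j = p *: Ev j))).

(* p is one of the eigenvalues p_i(j) (A_i E_j = p_i(j) E_j); the splitting
   field L is Q adjoined all such p. *)
Definition scheme_eigenvalue (v d : nat) (A : 'I_d.+1 -> 'M[CC]_v) (p : CC)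
    : Prop :=
  exists Ev, principal_idempotents A Ev /\
    exists i j, A i *m Ev j = p *: Ev j.

(* Main.v *)
Require Import Defs.
From mathcomp Require Import all_boot all_algebra all_field.
From mathcomp Require Import complex.
From mathcomp Require Import Rstruct.
Import GRing.Theory Num.Theory.
Local Open Scope ring_scope.

Definition zo (e : CC) := e = 0 \/ e = 1.

Lemma n01 : (0:CC) = 1 -> False.
Proof. by move=> h; have := oner_neq0 CC; rewrite -h eqxx. Qed.

Lemma zo_idem (e : CC) : e * e = e -> zo e.
Proof.
move=> h; have : e * (e - 1) = 0 by rewrite mulrBr mulr1 h subrr.
move/eqP; rewrite mulf_eq0 => /orP [/eqP|]; [left|rewrite subr_eq0 => /eqP; right] => //.
Qed.

Lemma zo_ge0 e : zo e -> 0 <= e.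
Proof. by case=> ->; rewrite ?lexx ?ler01. Qed.

Lemma zo_le1 e : zo e -> 0 <= 1 - e.
Proof. by case=> ->; rewrite ?subr0 ?subrr ?lexx ?ler01. Qed.

Lemma L01 (I : finType) (f g : I -> CC) : (forall z, zo (f z)) -> (forall z, zo (g z)) ->
  \sum_z f z * g z = \sum_z f z -> forall z, f z = 1 -> g z = 1.
Proof.
move=> hf hg hs z fz.
have h0 : \sum_z (f z * (1 - g z)) = 0.
  by rewrite -[RHS](subrr (\sum_z f z)) -{2}hs -sumrB; apply: eq_bigr => i _; rewrite mulrBr mulr1.
have hz : f z * (1 - g z) = 0.
  apply: (@psumr_eq0P _ _ _ _ _ h0 z isT).
  by move=> i _; apply: mulr_ge0; [apply: zo_ge0|apply: zo_le1].
move: hz; rewrite fz mul1r => /eqP; rewrite subr_eq0 => /eqP h; by rewrite -h.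
Qed.

Lemma L_one (I : finType) (f : I -> CC) a b : (forall z, zo (f z)) -> \sum_z f z = 1 ->
  f a = 1 -> b != a -> f b = 0.
Proof.
move=> hf hs fa ba; move: hs; rewrite (bigD1 a) //= fa -[X in _ = X]addr0 => /addrI h.
by apply: (psumr_eq0P _ h) => // i _; apply: zo_ge0.
Qed.

Section Main.
Variables (v d : nat) (A : 'I_d.+1 -> 'M[CC]_v) (E : {pred CC})
    (psi : 'M[CC]_v -> 'M[CC]_v).
Hypothesis hAS : association_scheme A.
Hypothesis hE : is_subfield E.
Hypothesis hW : forall M, span_in E A M -> span_in E A (psi M).
Hypothesis hlin : forall (a : CC) M N, a \in E -> span_in E A M -> span_in E A N ->
     psi (a *: M + N) = a *: psi M + psi N.
Hypothesis hnz : exists M, span_in E A M /\ psi M != 0.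
Hypothesis hmul : forall M N, span_in E A M -> span_in E A N ->
     psi (M *m N) = psi M *m psi N.
Hypothesis hsch : forall M N, span_in E A M -> span_in E A N ->
     psi (schur M N) = schur (psi M) (psi N).

Local Notation W := (span_in E A).

Lemma E0 : 0 \in E. Proof. by have [h0 [h1 [hD [hN [hM hI]]]]] := hE. Qed.
Lemma E1 : 1 \in E. Proof. by have [h0 [h1 [hD [hN [hM hI]]]]] := hE. Qed.
Lemma ED x y : x \in E -> y \in E -> x + y \in E. Proof. by have [h0 [h1 [hD [hN [hM hI]]]]] := hE; apply: hD. Qed.
Lemma EM x y : x \in E -> y \in E -> x * y \in E. Proof. by have [h0 [h1 [hD [hN [hM hI]]]]] := hE; apply: hM. Qed.

Lemma Esum (I : Type) (r : seq I) (P : pred I) (F : I -> CC) :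
  (forall i, F i \in E) -> \sum_(i <- r | P i) F i \in E.
Proof. move=> h; apply: (big_ind (fun x => x \in E)) => //; [exact: E0|exact: ED]. Qed.

Lemma A01 i x y : zo (A i x y). Proof. by have [h _] := hAS; apply: h. Qed.
Lemma AE i x y : A i x y \in E. Proof. by case: (A01 i x y) => ->; [exact: E0|exact: E1]. Qed.

Lemma Asum x y : \sum_i A i x y = 1.
Proof. by have [_ [_ [h _]]] := hAS; have := congr1 (fun M : 'M[CC]_v => M x y) h; rewrite summxE mxE. Qed.

Lemma Adisj k l x y : A k x y = 1 -> l != k -> A l x y = 0.
Proof. by move=> h hl; exact: (@L_one _ (fun i => A i x y) k l (fun i => A01 i x y) (Asum x y) h hl). Qed.

Lemma W_lin a M N : a \in E -> W M -> W N -> W (a *: M + N).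
Proof.
move=> ha [c [hc ->]] [c' [hc' ->]]; exists (fun i => a * c i + c' i); split.
  by move=> i; apply: ED => //; apply: EM.
rewrite scaler_sumr -big_split /=; apply: eq_bigr => i _.
by rewrite scalerA scalerDl.
Qed.

Lemma W0 : W 0.
Proof. by exists (fun _ => 0); split=> [i|]; [exact: E0|rewrite big1 // => i _; rewrite scale0r]. Qed.

Lemma W_A i : W (A i).
Proof.
exists (fun k => (k == i)%:R); split=> [k|].
  by case: (k == i); [exact: E1|exact: E0].
rewrite (bigD1 i) //= eqxx scale1r big1 ?addr0 // => k /negbTE ->; by rewrite scale0r.
Qed.

Lemma W_scale a M : a \in E -> W M -> W (a *: M).
Proof. by move=> ha hM; rewrite -[_ *: _]addr0; apply: W_lin => //; exact: W0. Qed.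

Lemma psi0 : psi 0 = 0.
Proof.
have := hlin 1 0 0 E1 W0 W0; rewrite !scale1r addr0 => h.
by apply/(addrI (psi 0)); rewrite addr0 -h.
Qed.

Lemma psi_scale a M : a \in E -> W M -> psi (a *: M) = a *: psi M.
Proof. by move=> ha hM; have := hlin a M 0 ha hM W0; rewrite !addr0 psi0 addr0. Qed.

Lemma psi_sum (r : seq 'I_d.+1) (c : 'I_d.+1 -> CC) (B : 'I_d.+1 -> 'M[CC]_v) :
  (forall i, c i \in E) -> (forall i, W (B i)) ->
  W (\sum_(i <- r) c i *: B i) /\
  psi (\sum_(i <- r) c i *: B i) = \sum_(i <- r) c i *: psi (B i).
Proof.
move=> hc hB; elim: r => [|i r [IHW IHp]]; first by rewrite !big_nil psi0; split=> //; exact: W0.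
rewrite !big_cons; split; first exact: W_lin.
by rewrite hlin // IHp.
Qed.

Definition Jm : 'M[CC]_v := const_mx 1.

Lemma W_J : W Jm.
Proof.
exists (fun _ => 1); split=> [_|]; first exact: E1.
by have [_ [_ [h _]]] := hAS; rewrite /Jm -h; apply: eq_bigr => i _; rewrite scale1r.
Qed.

Lemma W_I : W 1%:M.
Proof. by have [_ [h _]] := hAS; rewrite -h; exact: W_A. Qed.

Lemma psi01 M : W M -> schur M M = M -> forall x y, zo (psi M x y).
Proof.
move=> hM h x y; apply: zo_idem.
by rewrite -{3}h hsch // mxE.
Qed.

Lemma schurAA i : schur (A i) (A i) = A i.
Proof. by apply/matrixP => x y; rewrite mxE; case: (A01 i x y) => ->; rewrite ?mulr0 ?mulr1. Qed.

Lemma schurJ M : schur Jm M = M.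
Proof. by apply/matrixP => x y; rewrite !mxE mul1r. Qed.

Lemma schurII : schur 1%:M 1%:M = 1%:M :> 'M[CC]_v.
Proof. by apply/matrixP => x y; rewrite !mxE; case: (x == y); rewrite ?mulr0 ?mulr1. Qed.

Lemma JJ : Jm *m Jm = v%:R *: Jm.
Proof.
apply/matrixP => x y; rewrite !mxE.
under eq_bigr do rewrite !mxE mulr1.
by rewrite sumr_const card_ord mulr1.
Qed.

Lemma Enat n : n%:R \in E.
Proof. elim: n => [|n IH]; first exact: E0. by rewrite -addn1 natrD; apply: ED => //; exact: E1. Qed.

Lemma psiJ : psi Jm = Jm.
Proof.
set P := psi Jm.
have P01 : forall x y, zo (P x y) by apply: psi01; [exact: W_J|exact: schurJ].
have PP : P *m P = v%:R *: P.
  rewrite /P -hmul; [|exact: W_J|exact: W_J].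
  rewrite JJ psi_scale //; [exact: Enat|exact: W_J].
have key : forall x y, P x y = 1 -> forall w, P x w = 1 /\ P w y = 1.
  move=> x y hxy w.
  have hs : \sum_(z < v) (fun _ : 'I_v => (1:CC)) z * (P x z * P z y) = \sum_(z < v) (fun _ : 'I_v => (1:CC)) z.
    have e : \sum_w P x w * P w y = v%:R.
      by have := congr1 (fun M : 'M[CC]_v => M x y) PP; rewrite !mxE hxy mulr1.
    rewrite /= sumr_const card_ord -e; apply: eq_bigr => i _; by rewrite mul1r.
  have hf : forall z : 'I_v, zo ((fun _ => (1:CC)) z) by move=> _; right.
  have hg : forall z, zo ((fun w => P x w * P w y) z).
    by move=> z; case: (P01 x z) => ->; case: (P01 z y) => ->; rewrite ?mulr0 ?mul0r ?mulr1; [left|left|left|right].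
  have := @L01 _ _ _ hf hg hs w erefl.
  have := P01 x w; have := P01 w y.
  by case=> ->; case=> ->; rewrite /= ?mulr0 ?mul0r ?mulr1 => h; split => //; case: (n01 h).
case: (boolP [exists x, exists y, P x y != 0]) => [/existsP [x0 /existsP [y0 h0]]|hn].
  have h1 : P x0 y0 = 1 by case: (P01 x0 y0) h0 => -> //; rewrite eqxx.
  apply/matrixP => x y; rewrite mxE.
  have [h2 _] := key _ _ h1 y.
  by have [_ h3] := key _ _ h2 x.
exfalso; have [M [hM hpM]] := hnz.
move: hpM; rewrite -(schurJ M) hsch ?W_J //.
have -> : psi Jm = 0.
  apply/matrixP => x y; rewrite mxE; apply/eqP; apply: contraNT hn => h.
  by apply/existsP; exists x; apply/existsP; exists y.
  by move/eqP; apply; apply/matrixP => x y; rewrite !mxE mul0r.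
exact: W_J.
Qed.

Lemma psiI : psi 1%:M = 1%:M.
Proof.
set Q := psi 1%:M.
have Q01 : forall x y, zo (Q x y) by apply: psi01; [exact: W_I|exact: schurII].
have QQ : Q *m Q = Q by rewrite /Q -hmul ?mul1mx //; exact: W_I.
have QJ : Q *m Jm = Jm by rewrite /Q -{1}psiJ -hmul ?mul1mx ?psiJ //; [exact: W_I|exact: W_J].
have JQ : Jm *m Q = Jm by rewrite /Q -{1}psiJ -hmul ?mulmx1 ?psiJ //; [exact: W_J|exact: W_I].
have row : forall x, \sum_z Q x z = 1.
  move=> x; have := congr1 (fun M : 'M[CC]_v => M x x) QJ; rewrite !mxE => <-.
  by apply: eq_bigr => z _; rewrite mxE mulr1.
have col : forall y, \sum_z Q z y = 1.
  move=> y; have := congr1 (fun M : 'M[CC]_v => M y y) JQ; rewrite !mxE => <-.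
  by apply: eq_bigr => z _; rewrite mxE mul1r.
have sq : forall x y, \sum_z Q x z * Q z y = Q x y.
  by move=> x y; have := congr1 (fun M : 'M[CC]_v => M x y) QQ; rewrite !mxE.
have off : forall x y, Q x y = 1 -> x = y.
  move=> x y h.
  have hs : \sum_z Q x z * Q z y = \sum_z Q x z by rewrite sq row.
  have hyy := @L01 _ (fun z => Q x z) (fun z => Q z y) (Q01 x) (fun z => Q01 z y) hs y h.
  apply/eqP; apply: contraT => hxy.
  have := @L_one _ (fun z => Q z y) y x (fun z => Q01 z y) (col y) hyy hxy.
  by move=> /= h0; exfalso; apply: n01; by rewrite -h h0.
apply/matrixP => x y; rewrite mxE.
case: (eqVneq x y) => [<-|hxy] /=.
  have := row x; rewrite (bigD1 x) //= big1 ?addr0 // => z hz.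
  by case: (Q01 x z) => // /off /esym hzx; move: hz; rewrite hzx eqxx.
by case: (Q01 x y) => // /off hxy'; move: hxy; rewrite hxy' eqxx.
Qed.

Definition kk i x := \sum_z A i x z.

Lemma kkE i x : kk i x \in E.
Proof. by apply: Esum => z; exact: AE. Qed.

Lemma AJcomm i : A i *m Jm = Jm *m A i.
Proof.
have [_ [_ [hJ [_ [hC _]]]]] := hAS.
by rewrite /Jm -hJ mulmx_sumr mulmx_suml; apply: eq_bigr => j _; rewrite hC.
Qed.

Lemma kk_const i x x' : kk i x = kk i x'.
Proof.
have col : forall a b, kk i a = \sum_z A i z b.
  move=> a b; have := congr1 (fun M : 'M[CC]_v => M a b) (AJcomm i); rewrite !mxE.
  rewrite /kk; under eq_bigr do rewrite mxE mulr1.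
  by under [X in _ = X -> _]eq_bigr do rewrite mxE mul1r.
by rewrite (col x x') (col x' x').
Qed.

Lemma AJ i x : A i *m Jm = kk i x *: Jm.
Proof.
apply/matrixP => a b; rewrite !mxE mulr1 -(kk_const i a x) /kk.
by apply: eq_bigr => z _; rewrite mxE mulr1.
Qed.

Lemma CW (M : 'M[CC]_v) : (forall x y, M x y \in E) -> Cspan A M -> W M.
Proof.
move=> hME [c [_ hM]].
pose c' k := if [pick p : 'I_v * 'I_v | A k p.1 p.2 == 1] is Some p then M p.1 p.2 else 0.
exists c'; split.
  by move=> k; rewrite /c'; case: pickP => [p _|_]; [apply: hME|exact: E0].
rewrite {1}hM; apply: eq_bigr => k _; rewrite /c'.
case: pickP => [[x y] /= /eqP hk|hn].
  congr (_ *: _); rewrite hM summxE (bigD1 k) //= mxE hk mulr1 big1 ?addr0 //.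
  by move=> l hl; rewrite mxE (Adisj _ _ _ _ hk hl) mulr0.
have -> : A k = 0.
  apply/matrixP => x y; rewrite mxE; have := hn (x, y); rewrite /=.
  by case: (A01 k x y) => -> //; rewrite eqxx.
by rewrite !scaler0.
Qed.

Lemma W_AA i j : W (A i *m A j).
Proof.
have [_ [_ [_ [_ [_ hS]]]]] := hAS.
apply: CW (hS i j) => x y; rewrite mxE; apply: Esum => z; apply: EM; exact: AE.
Qed.

Lemma key i j x y : (A i)^T = A j -> psi (A i) x y = 1 -> psi (A j) y x = 1.
Proof.
move=> hij hxy.
set S := psi (A i); set T := psi (A j).
have S01 : forall a b, zo (S a b) by apply: psi01; [exact: W_A|exact: schurAA].
have T01 : forall a b, zo (T a b) by apply: psi01; [exact: W_A|exact: schurAA].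
set k := kk i x.
have SJ : S *m Jm = k *: Jm.
  by rewrite /S -{1}psiJ -hmul ?(AJ i x) ?psi_scale ?psiJ //; [exact: kkE|exact: W_J|exact: W_A|exact: W_J].
have hdiag : schur (A i *m A j) 1%:M = k *: 1%:M.
  apply/matrixP => a b; rewrite !mxE; case: (eqVneq a b) => [<-|hab]; rewrite ?mulr0 //.
  rewrite !mulr1 /k (kk_const i x a) /kk; apply: eq_bigr => z _.
  rewrite -hij mxE; by case: (A01 i a z) => ->; rewrite ?mulr0 ?mulr1.
have hST : schur (S *m T) 1%:M = k *: 1%:M.
  rewrite -psiI /S /T -hmul; [|exact: W_A|exact: W_A].
  rewrite -hsch; [|exact: W_AA|exact: W_I].
  by rewrite hdiag psi_scale //; [exact: kkE|exact: W_I].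
have e1 : \sum_z S x z * T z x = k.
  by have := congr1 (fun M : 'M[CC]_v => M x x) hST; rewrite !mxE eqxx !mulr1.
have e2 : \sum_z S x z = k.
  have := congr1 (fun M : 'M[CC]_v => M x x) SJ; rewrite !mxE mulr1 => <-.
  by apply: eq_bigr => z _; rewrite mxE mulr1.
have hs : \sum_z S x z * T z x = \sum_z S x z by rewrite e1 e2.
exact: (@L01 _ (fun z => S x z) (fun z => T z x) (S01 x) (fun z => T01 z x) hs y hxy).
Qed.

Lemma S01 i a b : zo (psi (A i) a b).
Proof. by apply: psi01; [exact: W_A|exact: schurAA]. Qed.

Lemma psiAT i : psi (A i)^T = (psi (A i))^T.
Proof.
have [_ [_ [_ [hT _]]]] := hAS.
have [j hij] := hT i.
have hji : (A j)^T = A i by rewrite -hij trmxK.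
rewrite hij; apply/matrixP => x y; rewrite mxE.
case: (S01 j x y) => hj; case: (S01 i y x) => hi; rewrite hj hi //.
  by have := key _ _ _ _ hij hi; rewrite hj.
by have := key _ _ _ _ hji hj; rewrite hi => /n01.
Qed.

Lemma trsum (c : 'I_d.+1 -> CC) (B : 'I_d.+1 -> 'M[CC]_v) :
  (\sum_i c i *: B i)^T = \sum_i c i *: (B i)^T.
Proof.
apply/matrixP => x y; rewrite mxE !summxE; apply: eq_bigr => i _; by rewrite !mxE.
Qed.

Lemma W_AT i : W (A i)^T.
Proof. have [_ [_ [_ [hT _]]]] := hAS; have [j ->] := hT i; exact: W_A. Qed.

Lemma mainT M : W M -> psi M^T = (psi M)^T.
Proof.
move=> [c [hc ->]].
have [_ e1] := psi_sum (index_enum _) _ _ hc W_A.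
have [_ e2] := psi_sum (index_enum _) _ _ hc W_AT.
rewrite trsum e2 e1 trsum; apply: eq_bigr => i _; by rewrite psiAT.
Qed.

Lemma map_conj (c : 'I_d.+1 -> CC) (B : 'I_d.+1 -> 'M[CC]_v) :
  (forall i x y, zo (B i x y)) ->
  map_mx (fun x : CC => x^*) (\sum_i c i *: B i) = \sum_i (c i)^* *: B i.
Proof.
move=> hB; apply/matrixP => x y; rewrite mxE !summxE (rmorph_sum (@Num.Def.conjC CC)); apply: eq_bigr => i _.
by rewrite !mxE rmorphM; case: (hB i x y) => ->; rewrite ?rmorph0 ?rmorph1.
Qed.

Hypothesis hconj : forall x, x \in E -> x^* \in E.

Lemma mainC M : W M -> psi (ctrmx M) = ctrmx (psi M).
Proof.
move=> [c [hc ->]].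
have hc' : forall i, (c i)^* \in E by move=> i; apply: hconj.
have [_ e1] := psi_sum (index_enum _) _ _ hc W_A.
have [w2 e2] := psi_sum (index_enum _) _ _ hc' W_A.
rewrite /ctrmx map_conj; last exact: A01.
rewrite mainT // e2 e1 map_conj //; exact: S01.
Qed.

End Main.

Theorem lemma3p2 (v d : nat) (A : 'I_d.+1 -> 'M[CC]_v) (E : {pred CC})
    (psi : 'M[CC]_v -> 'M[CC]_v) :
  association_scheme A ->
  is_subfield E ->
  (* E contains the splitting field L *)
  (forall p, scheme_eigenvalue A p -> p \in E) ->
  (* E is closed under complex conjugation *)
  (forall x, x \in E -> x^* \in E) ->
  (* psi : E[A] -> E[A] *)
  (forall M, span_in E A M -> span_in E A (psi M)) ->
  (* psi is E-linear *)
  (forall (a : CC) M N, a \in E -> span_in E A M -> span_in E A N ->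
     psi (a *: M + N) = a *: psi M + psi N) ->
  (* psi is non-zero *)
  (exists M, span_in E A M /\ psi M != 0) ->
  (forall M N, span_in E A M -> span_in E A N ->
     psi (M *m N) = psi M *m psi N) ->
  (forall M N, span_in E A M -> span_in E A N ->
     psi (schur M N) = schur (psi M) (psi N)) ->
  forall M, span_in E A M ->
    psi (M^T) = (psi M)^T /\ psi (ctrmx M) = ctrmx (psi M).
Proof.
move=> hAS hE _ hconj hW hlin hnz hmul hsch M hM; split.
  exact: (@mainT _ _ _ _ _ hAS hE hlin hnz hmul hsch M hM).
exact: (@mainC _ _ _ _ _ hAS hE hlin hnz hmul hsch hconj M hM).
Qed.
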